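(* Let $\mathcal A=\{0,1,2\}$ and $$X_{\mathcal F}=\Big\{x\in\{0,1,2\}^{\mathbb N}:\ \text{for all } i,n\in\mathbb N,\ x_ix_{i+1}\notin\{12,21\}\ \text{and}\ \#\{0\le j<n: x_{i+j}x_{i+j+1}\in\{00,11,22\}\}\le 100+\ln n\Big\},$$ with the left shift $\sigma$. Let $\mathcal G=\bigcup_{n\in\mathbb N}\{0a_10a_2\cdots0a_n: a_i\in\{1,2\}\}$. Then $\mathcal G\subset\mathcal L(X_{\mathcal F})$, $\mathcal G$ has $(W)$-specification, $\mathcal L(X_{\mathcal F})$ is edit approachable by $\mathcal G$, and $(X_{\mathcal F},\sigma)$ does not have the approximate product property.
   Context: $\{0,1,2\}^{\mathbb N}$ carries the metric $d(x,y)=\sum_{j\ge1}|x_j-y_j|2^{-j}$; $\mathcal L(X)$ is the set of finite words occurring in points of $X$. $\mathcal G\subset\mathcal L$ has $(W)$-specification if there is $\tau\in\mathbb N$ such that for all $u,v\in\mathcal G$ there is $w\in\mathcal L$ with $|w|\le\tau$ and $uwv\in\mathcal G$. The edit distance $\hat d(v,w)$ is the minimal number of single-symbol substitutions, insertions or deletions transforming $v$ into $w$; $\mathcal L$ is edit approachable by $\mathcal G$ if there is a nondecreasing $g:\mathbb N\to\mathbb N$ with $g(n)/n\to0$ such that every $w\in\mathcal L$ has $v\in\mathcal G$ with $\hat d(w,v)\le g(|w|)$. A dynamical system $(X,T)$ on a compact metric space has the approximate product property if for all $\delta_1,\delta_2,\epsilon>0$ there is $M(\delta_1,\delta_2,\epsilon)>0$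 such that for every $n\ge M$, every $k\in\mathbb N$ and all points $x_1,\dots,x_k\in X$ there exist $0=t_0<t_1<\dots<t_k$ with $n\le t_i-t_{i-1}\le(1+\delta_1)n$ and $z\in X$ such that $\#\{0\le j<n: d(T^{t_{i-1}+j}z,T^jx_i)>\epsilon\}<\delta_2n$ for each $i=1,\dots,k$. *)

(* Defs.v *)
From Stdlib Require Import Reals Lra Lia List Arith.
From Coquelicot Require Import Coquelicot.
Import ListNotations.
Open Scope R_scope.

Inductive sym : Type := s0 | s1 | s2.

Definition symval (a : sym) : nat :=
  match a with s0 => 0%nat | s1 => 1%nat | s2 => 2%nat end.

Definition sym_eqb (a b : sym) : bool := Nat.eqb (symval a) (symval b).

Definition point := nat -> sym.
Definition word := list sym.

(** d(x,y) = sum_{j>=1} |x_j - y_j| 2^{-j}, with x = x_1 x_2 ... stored as x 0, x 1, ... *)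
Definition dmet (x y : point) : R :=
  Series (fun j : nat => Rabs (INR (symval (x j)) - INR (symval (y j))) / 2 ^ (S j)).

Definition shift (x : point) : point := fun i => x (S i).

Definition lang (X : point -> Prop) (w : word) : Prop :=
  exists x, X x /\ exists i : nat, w = map x (seq i (length w)).

Definition n_equal_pairs (x : point) (i n : nat) : nat :=
  List.length (List.filter (fun j => sym_eqb (x (i + j)%nat) (x (i + j + 1)%nat)) (seq 0 n)).

Definition XF (x : point) : Prop :=
  (forall i : nat, ~ (x i = s1 /\ x (S i) = s2) /\ ~ (x i = s2 /\ x (S i) = s1)) /\
  (forall i n : nat, (1 <= n)%nat -> INR (n_equal_pairs x i n) <= 100 + ln (INR n)).

Definition Gset (v : word) : Prop :=
  exists a : list sym, (1 <= List.length a)%nat /\ List.Forall (fun c => c = s1 \/ c = s2) a /\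
    v = flat_map (fun c => (s0 :: c :: nil)) a.

Definition W_specification (G L : word -> Prop) : Prop :=
  exists tau : nat, forall u v, G u -> G v ->
    exists w, L w /\ (length w <= tau)%nat /\ G (u ++ w ++ v).

Inductive edit1 : word -> word -> Prop :=
  | edit_subst : forall u v a b, edit1 (u ++ a :: v) (u ++ b :: v)
  | edit_ins : forall u v a, edit1 (u ++ v) (u ++ a :: v)
  | edit_del : forall u v a, edit1 (u ++ a :: v) (u ++ v).

Inductive edit_steps : nat -> word -> word -> Prop :=
  | edit_refl : forall v, edit_steps 0 v v
  | edit_step : forall n u v w, edit_steps n u v -> edit1 v w -> edit_steps (S n) u w.

(** edit_dist_le v w k  <->  \hat d(v,w) <= k  (the edit distance is the minimal
    number of single edits, so it is <= k iff some edit sequence of length <= k exists). *)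
Definition edit_dist_le (v w : word) (k : nat) : Prop :=
  exists n, (n <= k)%nat /\ edit_steps n v w.

Definition edit_approachable (L G : word -> Prop) : Prop :=
  exists g : nat -> nat,
    (forall m n, (m <= n)%nat -> (g m <= g n)%nat) /\
    Un_cv (fun n => INR (g n) / INR n) 0 /\
    forall w, L w -> exists v, G v /\ edit_dist_le w v (g (length w)).

Definition count_gt (f : nat -> R) (eps : R) (n : nat) : nat :=
  List.length (List.filter (fun j => if Rlt_dec eps (f j) then true else false) (seq 0 n)).

Definition approx_product_property {S : Type} (X : S -> Prop) (d : S -> S -> R)
    (T : S -> S) : Prop :=
  forall d1 d2 eps : R, 0 < d1 -> 0 < d2 -> 0 < eps ->
  exists M : R, 0 < M /\
  forall (n k : nat) (xs : nat -> S), M <= INR n ->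
    (forall i, (1 <= i <= k)%nat -> X (xs i)) ->
    exists t : nat -> nat, t 0%nat = 0%nat /\
      (forall i, (1 <= i <= k)%nat ->
         (t (i - 1)%nat < t i)%nat /\
         INR n <= INR (t i - t (i - 1)%nat)%nat <= (1 + d1) * INR n) /\
      exists z, X z /\
        forall i, (1 <= i <= k)%nat ->
          INR (count_gt (fun j => d (Nat.iter (t (i - 1)%nat + j)%nat T z) (Nat.iter j T (xs i))) eps n)
            < d2 * INR n.

(* Main.v *)
Require Import Defs.
From Stdlib Require Import Reals Lra Lia List Arith.
From Stdlib Require Classical_Prop.
From Coquelicot Require Import Coquelicot.
Import ListNotations.
Open Scope R_scope.


Lemma ln_le_m1 (y : R) : 0 < y -> ln y <= y - 1.
Proof.
  intro Hy. pose proof (exp_ineq1_le (y - 1)).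
  rewrite <- (ln_exp (y - 1)). apply ln_le; lra.
Qed.

Lemma ln_ge0 (y : R) : 1 <= y -> 0 <= ln y.
Proof. intro. rewrite <- ln_1. apply ln_le; lra. Qed.

Lemma len_filter_ext (f g : nat -> bool) l :
  (forall j, f j = g j) -> length (filter f l) = length (filter g l).
Proof. intro H. induction l as [|a l IH]; simpl; auto. rewrite H. destruct (g a); simpl; auto. Qed.

Lemma filter_seq_S (f : nat -> bool) s n :
  length (filter f (seq (S s) n)) = length (filter (fun j => f (S j)) (seq s n)).
Proof.
  revert s; induction n as [|n IH]; intro s; simpl; auto.
  destruct (f (S s)); simpl; rewrite IH; auto.
Qed.

Lemma filter_seq_shift (f : nat -> bool) a b :
  length (filter f (seq a b)) = length (filter (fun j => f (a + j)%nat) (seq 0 b)).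
Proof.
  revert f; induction a as [|a IH]; intro f.
  - apply len_filter_ext; intro; reflexivity.
  - rewrite filter_seq_S, IH. apply len_filter_ext; intro; reflexivity.
Qed.

Definition P_eq (x : point) (j : nat) : bool := sym_eqb (x j) (x (j + 1)%nat).

Lemma npairs_seq x i n : n_equal_pairs x i n = length (filter (P_eq x) (seq i n)).
Proof. unfold n_equal_pairs. rewrite (filter_seq_shift (P_eq x) i n). apply len_filter_ext; intro; reflexivity. Qed.

Lemma len_filter_false (f : nat -> bool) l : (forall j, In j l -> f j = false) -> length (filter f l) = 0%nat.
Proof. induction l as [|a l IH]; intro H; simpl; auto. rewrite H by (left; auto). apply IH; intros; apply H; right; auto. Qed.

Lemma len_filter_true (f : nat -> bool) l : (forall j, In j l -> f j = true) -> length (filter f l) = length l.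
Proof. induction l as [|a l IH]; intro H; simpl; auto. rewrite H by (left; auto). simpl; rewrite IH; auto; intros; apply H; right; auto. Qed.

Lemma len_filter_le1 (f : nat -> bool) j0 s n : (forall j, f j = true -> j = j0) ->
  (length (filter f (seq s n)) <= 1)%nat.
Proof.
  intro H. revert s; induction n as [|n IH]; intro s; simpl; [lia|].
  destruct (f s) eqn:E; simpl; auto.
  apply H in E; subst. rewrite len_filter_false; auto.
  intros j Hj. apply in_seq in Hj. destruct (f j) eqn:E; auto. apply H in E. lia.
Qed.

Fixpoint ptl (a : list sym) (i : nat) : sym :=
  match a with
  | [] => if Nat.even i then s0 else s1
  | c :: a' => match i with 0 => s0 | 1 => c | S (S i') => ptl a' i' end
  end.

Definition nzs (c : sym) := c = s1 \/ c = s2.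

Lemma ptl_prop a : List.Forall nzs a -> forall i,
  (Nat.even i = true -> ptl a i = s0) /\ (Nat.even i = false -> ptl a i <> s0).
Proof.
  induction a as [|c a IH]; intros Ha i.
  - simpl. destruct (Nat.even i); split; intros; try discriminate; auto.
  - inversion Ha; subst. destruct i as [|[|i]]; simpl.
    + split; intros; try discriminate; auto.
    + split; intros; try discriminate. destruct H1 as [->| ->]; discriminate.
    + apply IH; auto.
Qed.

Lemma even_S' i : Nat.even (S i) = negb (Nat.even i).
Proof. rewrite Nat.even_succ, <- Nat.negb_even. reflexivity. Qed.

Lemma ptl_XF a : List.Forall nzs a -> XF (ptl a).
Proof.
  intro Ha. pose proof (ptl_prop a Ha) as P.
  assert (K : forall i, (ptl a i = s0 /\ ptl a (S i) <> s0) \/ (ptl a i <> s0 /\ ptl a (S i) = s0)).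
  { intro i. destruct (P i) as [A B]. destruct (P (S i)) as [C D]. rewrite even_S' in C, D.
    destruct (Nat.even i); [left|right]; split; auto. }
  split.
  - intro i. destruct (K i) as [[A B]|[A B]]; rewrite ?A, ?B; split; intros [E F]; congruence.
  - intros i n Hn. rewrite npairs_seq, len_filter_false.
    + simpl. pose proof (ln_ge0 (INR n)). assert (1 <= INR n) by (apply (le_INR 1); auto). lra.
    + intros j _. unfold P_eq. rewrite Nat.add_1_r.
      destruct (K j) as [[A B]|[A B]]; revert A B; destruct (ptl a j), (ptl a (S j)); simpl; intros; try reflexivity; congruence.
Qed.

Lemma map_seq_S {A} (f : nat -> A) s n : map f (seq (S s) n) = map (fun j => f (S j)) (seq s n).
Proof. rewrite <- seq_shift, map_map. reflexivity. Qed.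

Lemma ptl_word a : map (ptl a) (seq 0 (length (flat_map (fun c => s0 :: c :: nil) a))) = flat_map (fun c => s0 :: c :: nil) a.
Proof.
  induction a as [|c a IH]; simpl; auto.
  rewrite (map_seq_S _ 1), (map_seq_S _ 0). simpl. f_equal. f_equal.
  rewrite <- IH at 2. apply map_ext. reflexivity.
Qed.

Lemma G_lang : forall w, Gset w -> lang XF w.
Proof.
  intros w [a [_ [Ha ->]]]. exists (ptl a). split; [apply ptl_XF; auto|].
  exists 0%nat. symmetry. apply ptl_word.
Qed.

Lemma Wspec : W_specification Gset (lang XF).
Proof.
  exists 0%nat. intros u v Hu Hv. exists []. split; [|split; [simpl; lia|]].
  - exists (ptl []). split; [apply ptl_XF; constructor|]. exists 0%nat; reflexivity.
  - simpl. destruct Hu as [a [Ha1 [Ha2 ->]]]. destruct Hv as [b [Hb1 [Hb2 ->]]].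
    exists (a ++ b). split; [rewrite app_length; lia|]. split; [apply Forall_app; auto|].
    rewrite flat_map_app. reflexivity.
Qed.


Lemma steps_trans n m u v w : edit_steps n u v -> edit_steps m v w -> edit_steps (m + n) u w.
Proof. intros H1 H2. induction H2; simpl; auto. eapply edit_step; eauto. Qed.

Lemma edit1_prefix p u v : edit1 u v -> edit1 (p ++ u) (p ++ v).
Proof.
  intro H; destruct H; rewrite !app_assoc; constructor.
Qed.

Lemma steps_prefix p n u v : edit_steps n u v -> edit_steps n (p ++ u) (p ++ v).
Proof. intro H; induction H; [constructor|]. eapply edit_step; eauto. apply edit1_prefix; auto. Qed.

Lemma steps1 u v : edit1 u v -> edit_steps 1 u v.
Proof. intro; eapply edit_step; [constructor|]; auto. Qed.

Definition isz (c : sym) : bool := match c with s0 => true | _ => false end.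

Fixpoint eqc (w : word) : nat :=
  match w with
  | a :: t => match t with b :: _ => ((if sym_eqb a b then 1 else 0) + eqc t)%nat | [] => 0%nat end
  | [] => 0%nat end.

Fixpoint nobad (w : word) : Prop :=
  match w with
  | a :: t => match t with b :: _ => ~(a = s1 /\ b = s2) /\ ~(a = s2 /\ b = s1) /\ nobad t | [] => True end
  | [] => True end.

Definition Gp (v : word) : Prop :=
  exists a, List.Forall nzs a /\ v = flat_map (fun c => s0 :: c :: nil) a.

Definition cost (w : word) : nat :=
  (eqc w + 1 + match w with c :: _ => if isz c then 0 else 1 | [] => 0 end)%nat.

Lemma nobad_tl a t : nobad (a :: t) -> nobad t.
Proof. destruct t; simpl; tauto. Qed.

Lemma clean_core (L : nat) : forall w, (length w <= L)%nat -> nobad w ->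
  exists v m, Gp v /\ (m <= cost w)%nat /\ edit_steps m w v.
Proof.
  induction L as [|L IH]; intros w Hl Hn.
  - destruct w; simpl in Hl; [|lia]. exists [], 0%nat. split; [exists []; split; auto|].
    split; [lia|constructor].
  - destruct w as [|c r].
    + exists [], 0%nat. split; [exists []; split; auto|]. split; [lia|constructor].
    + assert (Hr : (length r <= L)%nat) by (simpl in Hl; lia).
      assert (Hnr : nobad r) by (eapply nobad_tl; eauto).
      destruct c.
      * destruct r as [|d r'].
        -- exists [], 1%nat. split; [exists []; split; auto|]. split; [unfold cost; simpl; lia|].
           apply steps1. apply (edit_del [] [] s0).
        -- destruct d.
           ++ assert (H1 : (length (s0 :: r') <= L)%nat) by (simpl in *; lia).
              destruct (IH (s0 :: r') H1 Hnr) as [v [m [Gv [Hm Hs]]]].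
              exists v, (m + 1)%nat. split; auto. split.
              ** unfold cost in *. simpl in *. lia.
              ** apply steps_trans with (v := s0 :: r'); auto. apply steps1. apply (edit_del [] (s0 :: r') s0).
           ++ assert (Hr' : (length r' <= L)%nat) by (simpl in *; lia). assert (Hnr' : nobad r') by (eapply nobad_tl; eauto).
              destruct (IH r' Hr' Hnr') as [v [m [Gv [Hm Hs]]]].
              exists (s0 :: s1 :: v), m. split.
              ** destruct Gv as [a [Ha ->]]. exists (s1 :: a). split; auto. constructor; auto. left; auto.
              ** split; [|apply (steps_prefix [s0; s1]); auto].
                 unfold cost in *. destruct r' as [|e r'']; simpl in *; [lia|].
                 destruct e; simpl in *; try lia. destruct Hn as [_ [_ [HH _]]]. exfalso; tauto.
           ++ assert (Hr' : (length r' <= L)%nat) by (simpl in *; lia). assert (Hnr' : nobad r') by (eapply nobad_tl; eauto).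
              destruct (IH r' Hr' Hnr') as [v [m [Gv [Hm Hs]]]].
              exists (s0 :: s2 :: v), m. split.
              ** destruct Gv as [a [Ha ->]]. exists (s2 :: a). split; auto. constructor; auto. right; auto.
              ** split; [|apply (steps_prefix [s0; s2]); auto].
                 unfold cost in *. destruct r' as [|e r'']; simpl in *; [lia|].
                 destruct e; simpl in *; try lia. destruct Hn as [_ [_ [HH _]]]. exfalso; tauto.
      * destruct (IH r Hr Hnr) as [v [m [Gv [Hm Hs]]]].
        exists (s0 :: s1 :: v), (S m). split.
        -- destruct Gv as [a [Ha ->]]. exists (s1 :: a). split; auto. constructor; auto. left; auto.
        -- split.
           ++ unfold cost in *. destruct r as [|e r'']; simpl in *; [lia|].
              destruct e; simpl in *; try lia. exfalso; tauto.
           ++ replace (S m) with (m + 1)%nat by lia.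
              apply steps_trans with (v := s0 :: s1 :: r).
              ** apply steps1. apply (edit_ins [] (s1 :: r) s0).
              ** apply (steps_prefix [s0; s1]); auto.
      * destruct (IH r Hr Hnr) as [v [m [Gv [Hm Hs]]]].
        exists (s0 :: s2 :: v), (S m). split.
        -- destruct Gv as [a [Ha ->]]. exists (s2 :: a). split; auto. constructor; auto. right; auto.
        -- split.
           ++ unfold cost in *. destruct r as [|e r'']; simpl in *; [lia|].
              destruct e; simpl in *; try lia. exfalso; tauto.
           ++ replace (S m) with (m + 1)%nat by lia.
              apply steps_trans with (v := s0 :: s2 :: r).
              ** apply steps1. apply (edit_ins [] (s2 :: r) s0).
              ** apply (steps_prefix [s0; s2]); auto.
Qed.

Lemma map_seq_SS (x : point) i L : map x (seq i (S L)) = x i :: map x (seq (S i) L).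
Proof. reflexivity. Qed.

Lemma nobad_XF x i L : XF x -> nobad (map x (seq i L)).
Proof.
  intros [H1 _]. revert i; induction L as [|L IH]; intro i; simpl; auto.
  destruct L as [|L]; simpl; auto. split; [apply H1|]. split; [apply H1|].
  apply (IH (S i)).
Qed.

Lemma eqc_map x i L : eqc (map x (seq i (S L))) = n_equal_pairs x i L.
Proof.
  rewrite npairs_seq. revert i; induction L as [|L IH]; intro i; [simpl; auto|].
  transitivity ((if sym_eqb (x i) (x (S i)) then 1 else 0) + eqc (map x (seq (S i) (S L))))%nat; [reflexivity|].
  rewrite IH. simpl. replace (P_eq x i) with (sym_eqb (x i) (x (S i))) by (unfold P_eq; rewrite Nat.add_1_r; auto).
  destruct (sym_eqb (x i) (x (S i))); reflexivity.
Qed.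

Definition gfun (L : nat) : nat := (104 + 2 * Nat.sqrt L)%nat.

Lemma eqc_bound x i L : XF x -> (eqc (map x (seq i L)) <= 100 + 2 * Nat.sqrt L)%nat.
Proof.
  intro HX. destruct L as [|L]; [simpl; lia|]. rewrite eqc_map.
  destruct L as [|L]; [rewrite npairs_seq; simpl; lia|].
  apply INR_le. destruct HX as [_ H2]. specialize (H2 i (S L) ltac:(lia)).
  set (s := Nat.sqrt (S (S L))).
  assert (Hs : (S (S L) < S s * S s)%nat) by apply Nat.sqrt_spec'.
  assert (A : ln (INR (S L)) <= 2 * INR s).
  { apply Rle_trans with (ln (INR (S s) * INR (S s))).
    - apply ln_le. apply lt_0_INR; lia. rewrite <- mult_INR. apply le_INR. lia.
    - rewrite ln_mult by (apply lt_0_INR; lia). pose proof (ln_le_m1 (INR (S s)) ltac:(apply lt_0_INR; lia)).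
      rewrite S_INR in H |- *. lra. }
  rewrite plus_INR, mult_INR. simpl (INR 2). replace (INR 100) with 100 by (simpl; lra). lra.
Qed.

Lemma div_lt_helper a b c : 0 < b -> a < c * b -> a / b < c.
Proof.
  intros Hb H. unfold Rdiv. apply (Rmult_lt_reg_r b); auto.
  rewrite Rmult_assoc, Rinv_l by lra. lra.
Qed.

Lemma gfun_cv : Un_cv (fun n => INR (gfun n) / INR n) 0.
Proof.
  intros eps He.
  destruct (archimed_cor1 (eps / 106) ltac:(lra)) as [K [HK1 HK2]].
  exists (K * K)%nat. intros n Hn. unfold R_dist. rewrite Rminus_0_r.
  set (s := Nat.sqrt n).
  assert (Hs : (K <= s)%nat) by (apply Nat.sqrt_le_square; unfold ge in Hn; auto).
  assert (Hss : (s * s <= n)%nat) by apply Nat.sqrt_spec'.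
  assert (Hg : (gfun n * s <= 106 * n)%nat) by (unfold gfun; fold s; nia).
  apply le_INR in Hg, Hs. rewrite !mult_INR in Hg.
  assert (HKr : 0 < INR K) by (apply lt_0_INR; auto).
  assert (HKe : 106 < eps * INR K).
  { apply (Rmult_lt_compat_r (INR K)) in HK1; auto. rewrite Rinv_l in HK1 by lra.
    replace (INR 106) with 106 in * by (simpl; lra). lra. }
  replace (INR 106) with 106 in Hg by (simpl; lra).
  assert (HN : 0 < INR n) by (apply lt_0_INR; nia).
  assert (Hpos : 0 <= INR (gfun n)) by apply pos_INR.
  rewrite Rabs_right.
  - apply div_lt_helper; auto. nra.
  - apply Rle_ge. unfold Rdiv. apply Rmult_le_pos; auto. left; apply Rinv_0_lt_compat; auto.
Qed.

Lemma edit_appr : edit_approachable (lang XF) Gset.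
Proof.
  exists gfun. split; [|split; [apply gfun_cv|]].
  - intros m n H. unfold gfun. pose proof (Nat.sqrt_le_mono m n H). lia.
  - intros w [x [HX [i Hw]]].
    assert (Hb := eqc_bound x i (length w) HX). rewrite <- Hw in Hb.
    assert (Hn : nobad w) by (rewrite Hw; apply nobad_XF; auto).
    destruct (clean_core (length w) w (le_n _) Hn) as [v [m [[a [Ha ->]] [Hm Hs]]]].
    assert (Hc : (cost w <= eqc w + 2)%nat) by (unfold cost; destruct w as [|c ?]; [|destruct (isz c)]; lia).
    destruct a as [|c a'].
    + exists [s0; s1]. split.
      * exists [s1]. split; [simpl; lia|]. split; [constructor; [left; auto|constructor]|reflexivity].
      * exists (2 + m)%nat. split; [unfold gfun; lia|].
        apply steps_trans with (v := []); auto. simpl.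
        apply steps_trans with (m := 1%nat) (v := [s1]).
        -- apply steps1. apply (edit_ins [] [] s1).
        -- apply steps1. apply (edit_ins [] [s1] s0).
    + exists (flat_map (fun c => s0 :: c :: nil) (c :: a')). split.
      * exists (c :: a'). split; [simpl; lia|]. split; auto.
      * exists m. split; [unfold gfun; lia|]. auto.
Qed.


Lemma iter_shift m z p : Nat.iter m shift z p = z (m + p)%nat.
Proof.
  revert p; induction m as [|m IH]; intro p; [reflexivity|].
  simpl. unfold shift at 1. rewrite IH. f_equal. lia.
Qed.

Lemma sym_diff_le2 (a b : sym) : Rabs (INR (symval a) - INR (symval b)) <= 2.
Proof. apply Rabs_le; destruct a, b; simpl; lra. Qed.

Lemma sym_diff_ge1 (a b : sym) : symval a <> symval b -> 1 <= Rabs (INR (symval a) - INR (symval b)).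
Proof. intro H. destruct a, b; simpl in *; try congruence; unfold Rabs; destruct Rcase_abs; lra. Qed.

Lemma dterm_ex (y y' : point) :
  ex_series (fun j => Rabs (INR (symval (y j)) - INR (symval (y' j))) / 2 ^ (S j)).
Proof.
  apply (@ex_series_le R_AbsRing R_CompleteNormedModule _ (fun j => (/2) ^ j)).
  - intro j. change norm with Rabs. simpl. 
    pose proof (sym_diff_le2 (y j) (y' j)) as H.
    pose proof (Rabs_pos (INR (symval (y j)) - INR (symval (y' j)))) as H0.
    assert (Hp : 0 < 2 ^ j) by (apply pow_lt; lra).
    rewrite pow_inv. rewrite Rabs_right.
    + unfold Rdiv. rewrite Rinv_mult. 
      apply Rle_trans with (2 * (/ 2 * / 2 ^ j)).
      * apply Rmult_le_compat_r; auto. apply Rmult_le_pos; left; apply Rinv_0_lt_compat; lra.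
      * lra.
    + apply Rle_ge. unfold Rdiv. apply Rmult_le_pos; auto. left; apply Rinv_0_lt_compat; lra.
  - apply ex_series_geom. rewrite Rabs_right; lra.
Qed.

Lemma Series0 : Series (fun _ => 0) = 0.
Proof.
  transitivity (Series (fun n : nat => 0 * 0)); [apply Series_ext; intro; ring|].
  rewrite Series_scal_l. ring.
Qed.

Lemma dmet_lb (y y' : point) : symval (y 0%nat) <> symval (y' 0%nat) -> / 2 <= dmet y y'.
Proof.
  intro H. unfold dmet. rewrite Series_incr_1 by apply dterm_ex.
  assert (A : 0 <= Series (fun k => Rabs (INR (symval (y (S k))) - INR (symval (y' (S k))))/ 2 ^ (S (S k)))).
  { rewrite <- Series0. apply Series_le.
    - intro n. split; [lra|]. unfold Rdiv. apply Rmult_le_pos; [apply Rabs_pos|].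
      left; apply Rinv_0_lt_compat; apply pow_lt; lra.
    - apply (ex_series_incr_1 (fun j => Rabs (INR (symval (y j)) - INR (symval (y' j))) / 2 ^ (S j))). apply dterm_ex. }
  pose proof (sym_diff_ge1 _ _ H). simpl pow in *. lra.
Qed.

Definition xh (h : nat) : point := fun j => if xorb (Nat.even j) (h <=? j)%nat then s0 else s1.


Lemma isz_xh h j : isz (xh h j) = xorb (Nat.even j) (h <=? j)%nat.
Proof. unfold xh. destruct (xorb _ _); reflexivity. Qed.

Lemma xh_XF h : XF (xh h).
Proof.
  split.
  - intro i. unfold xh. destruct (xorb _ _), (xorb _ _); split; intros [A B]; discriminate.
  - intros i n Hn. rewrite npairs_seq.
    assert (L : (length (filter (P_eq (xh h)) (seq i n)) <= 1)%nat).
    { apply (len_filter_le1 _ (h - 1)). intros j Hj. unfold P_eq, xh in Hj.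
      rewrite Nat.add_1_r, even_S' in Hj.
      destruct (Nat.leb_spec h j), (Nat.leb_spec h (S j)); try lia;
      destruct (Nat.even j); simpl in Hj; discriminate. }
    apply le_INR in L. pose proof (ln_ge0 (INR n)). assert (1 <= INR n) by (apply (le_INR 1); auto).
    simpl in L. lra.
Qed.

Lemma alt_step a b : sym_eqb a b = false -> ~(a = s1 /\ b = s2) -> ~(a = s2 /\ b = s1) -> isz b = negb (isz a).
Proof. destruct a, b; simpl; intros; try reflexivity; try discriminate; exfalso; tauto. Qed.

Lemma isz_symval a b : isz a <> isz b -> symval a <> symval b.
Proof. destruct a, b; simpl; congruence. Qed.

Lemma seg_err (z : point) (T h : nat) : XF z -> (1 <= h)%nat ->
  (forall j, (j + 1 < 2 * h)%nat -> P_eq z (T + j) = false) ->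
  (h <= count_gt (fun j => dmet (Nat.iter (T + j) shift z) (Nat.iter j shift (xh h))) (/4) (2 * h))%nat.
Proof.
  intros [HZ1 _] Hh Hno.
  assert (Alt : forall j, (j < 2 * h)%nat -> isz (z (T + j)%nat) = xorb (isz (z T)) (negb (Nat.even j))).
  { induction j as [|j IH]; intro Hj.
    - rewrite Nat.add_0_r. simpl. destruct (isz (z T)); reflexivity.
    - specialize (Hno j ltac:(lia)). unfold P_eq in Hno.
      replace (T + S j)%nat with (T + j + 1)%nat by lia.
      destruct (HZ1 (T + j)%nat) as [A B]. rewrite <- Nat.add_1_r in A, B.
      rewrite (alt_step _ _ Hno A B), IH by lia. rewrite even_S'.
      destruct (isz (z T)), (Nat.even j); reflexivity. }
  assert (Err : forall j, (j < 2 * h)%nat -> isz (z (T + j)%nat) <> isz (xh h j) ->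
    (if Rlt_dec (/4) (dmet (Nat.iter (T + j) shift z) (Nat.iter j shift (xh h))) then true else false) = true).
  { intros j Hj Hd. destruct Rlt_dec as [|n]; auto. exfalso. apply n.
    apply Rlt_le_trans with (/2); [lra|]. apply dmet_lb. rewrite !iter_shift, !Nat.add_0_r.
    apply isz_symval; auto. }
  unfold count_gt. replace (2 * h)%nat with (h + h)%nat by lia.
  rewrite seq_app, filter_app, length_app. simpl (0 + h)%nat.
  destruct (isz (z T)) eqn:E.
  - rewrite (len_filter_true _ (seq h h)), length_seq; [lia|].
    intros j Hj. apply in_seq in Hj. apply Err; [lia|]. rewrite Alt, isz_xh by lia; try rewrite E.
    destruct (Nat.leb_spec h j); [|lia]. destruct (Nat.even j); simpl; discriminate.
  - rewrite (len_filter_true _ (seq 0 h)), length_seq; [lia|].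
    intros j Hj. apply in_seq in Hj. apply Err; [lia|]. rewrite Alt, isz_xh by lia; try rewrite E.
    destruct (Nat.leb_spec h j); [lia|]. destruct (Nat.even j); simpl; discriminate.
Qed.

Lemma len_filter_ge1 (f : nat -> bool) l a : In a l -> f a = true -> (1 <= length (filter f l))%nat.
Proof.
  intros Hi Hf. assert (In a (filter f l)) by (apply filter_In; auto).
  destruct (filter f l); [contradiction|simpl; lia].
Qed.

Lemma not_app : ~ approx_product_property XF dmet shift.
Proof.
  intro H. destruct (H 1 (/4) (/4) ltac:(lra) ltac:(lra) ltac:(lra)) as [M [HM HP]].
  destruct (archimed_cor1 (/M) ltac:(apply Rinv_0_lt_compat; lra)) as [N0 [HN0 HN0p]].
  assert (HMN : M <= INR N0).
  { destruct (Rle_or_lt M (INR N0)) as [|Hlt]; auto. exfalso.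
    assert (0 < INR N0) by (apply lt_0_INR; auto).
    assert (/ M <= / INR N0) by (apply Rinv_le_contravar; lra). lra. }
  set (h := N0). set (n := (2 * h)%nat). set (k := (4 * n + 200)%nat).
  assert (Hn : M <= INR n) by (apply Rle_trans with (INR N0); auto; apply le_INR; unfold n, h; lia).
  destruct (HP n k (fun _ => xh h) Hn (fun i _ => xh_XF h)) as [t [Ht0 [Ht [z [Hz Hc]]]]].
  assert (Seg : forall i, (1 <= i <= k)%nat -> exists j, (j + 1 < n)%nat /\ P_eq z (t (i - 1)%nat + j)%nat = true).
  { intros i Hi. destruct (Classical_Prop.classic (exists j, (j + 1 < n)%nat /\ P_eq z (t (i - 1)%nat + j)%nat = true)) as [|Hne]; auto.
    exfalso. specialize (Hc i Hi).
    assert (Hle := seg_err z (t (i-1)%nat) h Hz ltac:(unfold h; lia)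
      (fun j Hj => match P_eq z (t (i - 1)%nat + j)%nat as b return P_eq z (t (i - 1)%nat + j)%nat = b -> b = false with
                   | true => fun E => False_ind _ (Hne (ex_intro _ j (conj Hj E)))
                   | false => fun _ => eq_refl end eq_refl)).
    fold n in Hle. apply le_INR in Hle.
    assert (1 <= INR h) by (apply (le_INR 1); unfold h; lia).
    assert (INR n = 2 * INR h) by (unfold n; rewrite mult_INR; simpl; lra). lra. }
  assert (Tstep : forall i, (i < k)%nat -> (t i < t (S i))%nat /\ (n <= t (S i) - t i <= 2 * n)%nat).
  { intros i Hi. destruct (Ht (S i) ltac:(lia)) as [A [B C]].
    replace (S i - 1)%nat with i in * by lia. split; auto. split.
    - apply INR_le; auto.
    - apply INR_le. rewrite mult_INR. simpl (INR 2). lra. }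
  assert (E : forall i, (i <= k)%nat -> (i <= n_equal_pairs z 0 (t i))%nat /\ (t i <= 2 * n * i)%nat).
  { induction i as [|i IH]; intro Hi; [rewrite Ht0; simpl; lia|].
    destruct (IH ltac:(lia)) as [IH1 IH2]. destruct (Tstep i ltac:(lia)) as [T1 [T2 T3]].
    split; [|nia].
    destruct (Seg (S i) ltac:(lia)) as [j [Hj Hp]]. replace (S i - 1)%nat with i in Hp by lia.
    rewrite npairs_seq in *. replace (t (S i)) with (t i + (t (S i) - t i))%nat by lia.
    rewrite seq_app, filter_app, length_app. simpl (0 + t i)%nat.
    assert (1 <= length (filter (P_eq z) (seq (t i) (t (S i) - t i))))%nat.
    { apply (len_filter_ge1 _ _ (t i + j)%nat); auto. apply in_seq. lia. }
    lia. }
  destruct (E k (le_n k)) as [E1 E2].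
  assert (Hk1 : (1 <= t k)%nat) by (destruct (Tstep (k - 1)%nat ltac:(unfold k; lia)) as [T1 _];
     replace (S (k - 1)) with k in T1 by (unfold k; lia); lia).
  destruct Hz as [_ Hz2]. specialize (Hz2 0%nat (t k) Hk1).
  apply le_INR in E1, E2.
  assert (Hnp : 0 < INR n) by (apply lt_0_INR; unfold n, h; lia).
  assert (Hkp : 0 < INR k) by (apply lt_0_INR; unfold k; lia).
  assert (L1 : ln (INR (t k)) <= ln (2 * INR n) + ln (INR k)).
  { rewrite <- ln_mult by lra. apply ln_le; [apply lt_0_INR; lia|]. rewrite !mult_INR in E2. simpl (INR 2) in E2. lra. }
  assert (L2 : ln (2 * INR n) <= 2 * INR n - 1) by (apply ln_le_m1; lra).
  assert (L3 : ln (INR k) <= INR k / 2).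
  { replace (INR k) with (2 * (INR k / 2)) at 1 by field. rewrite ln_mult by lra.
    pose proof (ln_le_m1 2 ltac:(lra)). pose proof (ln_le_m1 (INR k / 2) ltac:(lra)). lra. }
  assert (Hk : INR k = 4 * INR n + 200).
  { unfold k. rewrite plus_INR, mult_INR. simpl (INR 4). replace (INR 200) with 200 by (simpl; lra). lra. }
  lra.
Qed.


Theorem proposition6p1 :
  (forall w, Gset w -> lang XF w) /\
  W_specification Gset (lang XF) /\
  edit_approachable (lang XF) Gset /\
  ~ approx_product_property XF dmet shift.
Proof.
  split; [exact G_lang|]. split; [exact Wspec|]. split; [exact edit_appr|]. exact not_app.
Qed.
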